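(* Let $n=2t$ be even, $V=V_n(q)$, and let $X$ be the set of all unordered pairs $\{U,W\}$ of $t$-dimensional subspaces of $V$ with $V=U\oplus W$. Fix a basis $e_1,\dots,e_n$ of $V$, put $U_0=\langle e_1,\dots,e_t\rangle$, $W_0=\langle e_{t+1},\dots,e_n\rangle$, and let $p$ be the linear map swapping $e_t$ and $e_{t+1}$ and fixing the other basis vectors. Let $\mathcal{O}_1$ be the graph on $X$ whose edge set is the orbit under $\mathrm{P\Gamma L}_n(q)$ of the edge $\{\{U_0,W_0\},\{U_0p,W_0p\}\}$, and let $d$ denote distance in $\mathcal{O}_1$. For $A=\{U_1,W_1\}$ and $B=\{U_2,W_2\}$ in $X$ define $\dim(A,B)=\max\{\dim(U_1\cap W_2),\dim(U_1\cap U_2),\dim(U_2\cap W_1),\dim(W_1\cap W_2)\}$. Then $d(A,B)\ge t-\dim(A,B)$ for all $A,B\in X$. *)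

(* Defs.v *)
(* vector spaces V_n(q) = 'rV[F]_n over a finite field F (q = #|F|). *)
From HB Require Import structures.
From mathcomp Require Import all_boot all_order all_algebra all_field.
Set Implicit Arguments. Unset Strict Implicit. Unset Printing Implicit Defensive.
Import GRing.Theory.
Local Open Scope ring_scope.

Notation Vsp F t := 'rV[F]_(t + t).

Section Defs.
Variable F : finFieldType.
Variable t : nat.

(* A vertex is an (ordered representative of an) unordered pair {U,W}. *)
Definition vertex := ({vspace Vsp F t} * {vspace Vsp F t})%type.

Definition ueq (T : Type) (a b : T * T) : Prop :=
  (a.1 = b.1 /\ a.2 = b.2) \/ (a.1 = b.2 /\ a.2 = b.1).

Definition inX (A : vertex) : Prop :=
  \dim A.1 = t /\ \dim A.2 = t /\ directv (A.1 + A.2)%VS /\ (A.1 + A.2)%VS = fullv.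

Definition e (i : 'I_(t + t)) : Vsp F t := delta_mx 0 i.

(* swap of the (0-indexed) coordinates t-1 and t, i.e. e_t <-> e_{t+1} (1-indexed) *)
Definition swapn (k : nat) : nat :=
  if k == t.-1 then t else if k == t then t.-1 else k.

Definition pmx : 'M[F]_(t + t) := \matrix_(i, j) (swapn i == j)%:R.

Definition p (v : Vsp F t) : Vsp F t := v *m pmx.

Definition U0 : {vspace Vsp F t} := (\sum_(i < t + t | (i < t)%N) <[e i]>)%VS.
Definition W0 : {vspace Vsp F t} := (\sum_(i < t + t | (t <= i)%N) <[e i]>)%VS.
Definition U0p : {vspace Vsp F t} := (\sum_(i < t + t | (i < t)%N) <[p (e i)]>)%VS.
Definition W0p : {vspace Vsp F t} := (\sum_(i < t + t | (t <= i)%N) <[p (e i)]>)%VS.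

(* semilinear bijections of V (elements of GammaL_n(q); PGammaL acts on subspaces through them) *)
Definition semilinear (f : Vsp F t -> Vsp F t) : Prop :=
  bijective f /\
  exists sigma : {rmorphism F -> F}, bijective sigma /\
    (forall u v, f (u + v) = f u + f v) /\
    (forall (a : F) v, f (a *: v) = sigma a *: f v).

Definition is_image (f : Vsp F t -> Vsp F t) (U U' : {vspace Vsp F t}) : Prop :=
  forall w, w \in U' <-> exists2 v, v \in U & w = f v.

Definition adjO1 (A B : vertex) : Prop :=
  exists f, semilinear f /\
  exists Ug Wg Upg Wpg : {vspace Vsp F t},
    is_image f U0 Ug /\ is_image f W0 Wg /\ is_image f U0p Upg /\ is_image f W0p Wpg /\
    ((ueq A (Ug, Wg) /\ ueq B (Upg, Wpg)) \/ (ueq A (Upg, Wpg) /\ ueq B (Ug, Wg))).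

Inductive walk : vertex -> vertex -> nat -> Prop :=
| walk0 A B : ueq A B -> walk A B 0
| walkS A C B m : adjO1 A C -> walk C B m -> walk A B m.+1.

Definition dimAB (A B : vertex) : nat :=
  maxn (maxn (\dim (A.1 :&: B.2)%VS) (\dim (A.1 :&: B.1)%VS))
       (maxn (\dim (B.1 :&: A.2)%VS) (\dim (A.2 :&: B.2)%VS)).

End Defs.

(* Main.v *)
Require Import Defs.
From HB Require Import structures.
From mathcomp Require Import all_boot all_order all_algebra all_field.
From mathcomp Require Import zify.
Set Implicit Arguments. Unset Strict Implicit. Unset Printing Implicit Defensive.
Import GRing.Theory.

Section Aux.
Variable K : fieldType.
Variable vT : vectType K.

Lemma dim_line_le (X Y S : {vspace vT}) (v : vT) :
  (X <= Y + <[v]>)%VS -> (\dim (X :&: S) <= \dim (Y :&: S) + 1)%N.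
Proof.
move=> hX.
set Z := ((Y + <[v]>) :&: S)%VS.
have h1 : (\dim (X :&: S) <= \dim Z)%N by apply: dimvS; apply: capvS.
have h2 := dimv_sum_cap Z Y.
have h3 := dimv_sum_cap Y <[v]>.
have h4 : (\dim (Z + Y) <= \dim (Y + <[v]>))%N.
  by apply: dimvS; rewrite subv_add capvSl addvSl.
have h5 : (\dim (Z :&: Y) <= \dim (Y :&: S))%N.
  apply: dimvS; rewrite capvC; apply: capvS => //; exact: capvSr.
have h6 : (\dim <[v]> <= 1)%N by rewrite dim_vline; case: (v != 0%R).
lia.
Qed.

End Aux.
Section Main.
Variable F : finFieldType.
Variable t : nat.
Local Open Scope ring_scope.

Definition w (k : nat) : Vsp F t := \row_j ((k == j :> nat)%:R : F).

Lemma eE (i : 'I_(t + t)) : e F i = w i.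
Proof. by apply/rowP => j; rewrite !mxE eqxx /= eq_sym. Qed.

Lemma peE (i : 'I_(t + t)) : p (e F i) = w (swapn t i).
Proof. by rewrite /p /e -rowE; apply/rowP => j; rewrite !mxE. Qed.

Lemma swapnE k : (k = t.-1 /\ swapn t k = t) \/ (k <> t.-1 /\ k = t /\ swapn t k = t.-1)
  \/ (k <> t.-1 /\ k <> t /\ swapn t k = k).
Proof. rewrite /swapn; case: eqP => h1; [|case: eqP => h2]; tauto. Qed.

Lemma memU0 k : (k < t)%N -> w k \in U0 F t.
Proof.
move=> hk; have hk2 : (k < t + t)%N by lia.
have -> : w k = e F (Ordinal hk2) by rewrite eE.
by rewrite memvE; apply: (sumv_sup (Ordinal hk2)) => //=.
Qed.

Lemma memW0 k : (t <= k)%N -> (k < t + t)%N -> w k \in W0 F t.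
Proof.
move=> hk hk2.
have -> : w k = e F (Ordinal hk2) by rewrite eE.
by rewrite memvE; apply: (sumv_sup (Ordinal hk2)) => //=.
Qed.

Lemma memU0p (i : 'I_(t + t)) : (i < t)%N -> p (e F i) \in U0p F t.
Proof. by move=> hi; rewrite memvE; apply: (sumv_sup i). Qed.

Lemma memW0p (i : 'I_(t + t)) : (t <= i)%N -> p (e F i) \in W0p F t.
Proof. by move=> hi; rewrite memvE; apply: (sumv_sup i). Qed.

Lemma inl_line (S : {vspace Vsp F t}) x v : x \in S -> x \in (S + <[v]>)%VS.
Proof. by move=> h; apply: (subvP (addvSl _ _)). Qed.

Lemma inr_line (S : {vspace Vsp F t}) v : v \in (S + <[v]>)%VS.
Proof. by apply: (subvP (addvSr _ _)); apply: memv_line. Qed.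

Lemma ca : (U0p F t <= U0 F t + <[w t]>)%VS.
Proof.
apply/subv_sumP => i hi; rewrite -memvE peE.
case: (eqVneq (swapn t i) t) => [->|hne]; first exact: inr_line.
apply: inl_line; apply: memU0.
move: hne; have := swapnE i; lia.
Qed.

Lemma cb : (W0p F t <= W0 F t + <[w t.-1]>)%VS.
Proof.
apply/subv_sumP => i hi; rewrite -memvE peE.
case: (eqVneq (swapn t i) t.-1) => [->|hne]; first exact: inr_line.
have hi2 := ltn_ord i.
apply: inl_line; apply: memW0;
move: hne; have := swapnE i; lia.
Qed.

Lemma cc : (U0 F t <= U0p F t + <[w t.-1]>)%VS.
Proof.
apply/subv_sumP => i hi; rewrite -memvE eE.
case: (eqVneq (i : nat) t.-1) => [->|hne]; first exact: inr_line.
apply: inl_line.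
have -> : w i = w (swapn t i) by congr w; have := swapnE i; lia.
rewrite -peE; exact: memU0p.
Qed.

Lemma cd : (W0 F t <= W0p F t + <[w t]>)%VS.
Proof.
apply/subv_sumP => i hi; rewrite -memvE eE.
case: (eqVneq (i : nat) t) => [->|hne]; first exact: inr_line.
apply: inl_line.
have -> : w i = w (swapn t i).
  by congr w; have := swapnE i; lia.
rewrite -peE; exact: memW0p.
Qed.

Lemma image_line (f : Vsp F t -> Vsp F t) (X Y X' Y' : {vspace Vsp F t}) v :
  Defs.semilinear f -> is_image f X X' -> is_image f Y Y' ->
  (X <= Y + <[v]>)%VS -> (X' <= Y' + <[f v]>)%VS.
Proof.
move=> [_ hsg] hX hY hXY; case: hsg => sg [_ [fD fZ]]; apply/subvP => x hx.
have [x0 hx0 ->] := (proj1 (hX x) hx).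
have /memv_addP [y hy [z /vlineP [k ->] ->]] := subvP hXY _ hx0.
rewrite fD fZ; apply: memv_add; first by apply/hY; exists y.
by apply/vlineP; exists (sg k).
Qed.

End Main.

Section Main2.
Variable F : finFieldType.
Variable t : nat.
Local Open Scope ring_scope.

Definition near (A C : vertex F t) := exists v1 v2 : Vsp F t,
  ((C.1 <= A.1 + <[v1]> /\ C.2 <= A.2 + <[v2]>) \/
   (C.1 <= A.2 + <[v1]> /\ C.2 <= A.1 + <[v2]>))%VS.

Lemma near_of (P Q A C : vertex F t) a b :
  (Q.1 <= P.1 + <[a]>)%VS -> (Q.2 <= P.2 + <[b]>)%VS ->
  ueq A P -> ueq C Q -> near A C.
Proof.
move=> ha hb hA hC; rewrite /near.
case: hA => -[-> ->]; case: hC => -[-> ->].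
- by exists a, b; left.
- by exists b, a; right.
- by exists a, b; right.
- by exists b, a; left.
Qed.

Lemma adj_near (A C : vertex F t) : adjO1 A C -> near A C.
Proof.
move=> [f [hf [Ug [Wg [Upg [Wpg [hU [hW [hUp [hWp hcase]]]]]]]]]].
case: hcase => -[hA hC].
- apply: (near_of (P := (Ug, Wg)) (Q := (Upg, Wpg))) hA hC => /=.
  + exact: (image_line hf hUp hU (ca F t)).
  + exact: (image_line hf hWp hW (cb F t)).
- apply: (near_of (P := (Upg, Wpg)) (Q := (Ug, Wg))) hA hC => /=.
  + exact: (image_line hf hU hUp (cc F t)).
  + exact: (image_line hf hW hWp (cd F t)).
Qed.

Lemma near_dim (A C B : vertex F t) : near A C -> (dimAB C B <= dimAB A B + 1)%N.
Proof.
move=> [v1 [v2 [[h1 h2]|[h1 h2]]]]; rewrite /dimAB.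
- have := dim_line_le B.2 h1; have := dim_line_le B.1 h1.
  have := dim_line_le B.1 h2; have := dim_line_le B.2 h2.
  rewrite (capvC B.1 C.2) (capvC B.1 A.2); lia.
- have := dim_line_le B.2 h1; have := dim_line_le B.1 h1.
  have := dim_line_le B.1 h2; have := dim_line_le B.2 h2.
  rewrite (capvC B.1 C.2) (capvC B.1 A.2) (capvC A.2 B.1); lia.
Qed.

End Main2.

Theorem lemma3p5 (F : finFieldType) (t : nat) (A B : vertex F t) :
  inX A -> inX B ->
  forall m : nat, walk A B m -> (t - dimAB A B <= m)%N.
Proof.
move=> _ hB m hw; elim: hw hB => {A B m}.
- move=> A B hAB [hB1 [hB2 _]]; rewrite /dimAB.
  case: hAB => -[-> _]; rewrite capvv; lia.
- move=> A C B m hAC _ IH hB.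
  have := IH hB; have := near_dim B (adj_near hAC); lia.
Qed.
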